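(* Let $d$ and $q$ be positive integers and let $G$ be a finite (loop-free) graph with maximum degree at most $d$. Put $D := d \cdot \#V(G) - 2 \cdot \#E(G)$. Then there is a $d$-regular graph $G'$ such that (1) $\#V(G') \leq 1 + \max\{3 + D/d,\ 2\lceil d/2 \rceil\} + \#V(G)$, and (2) $\hom(G, H_q) \leq \hom(G', H_q)$.
   Context: $H_q$ is the graph (loops allowed) on vertex set $\{1,2,\dots,q\}$ in which vertices $u,v$ (possibly equal) are adjacent iff $u + v \geq q$. For graphs $G, H$, $\hom(G,H)$ is the number of graph homomorphisms $G \to H$, i.e. maps $\varphi: V(G) \to V(H)$ such that $xy \in E(G)$ implies $\varphi(x)\varphi(y) \in E(H)$. *)

(* Defs.v *)
From mathcomp Require Import all_boot all_order all_algebra.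
Set Implicit Arguments. Unset Strict Implicit. Unset Printing Implicit Defensive.

Definition simple_graph (n : nat) (e : rel 'I_n) : Prop :=
  (forall x y, e x y = e y x) /\ (forall x, ~~ e x x).

Definition degree (n : nat) (e : rel 'I_n) (v : 'I_n) : nat := #|[set w | e v w]|.

Definition nedges (n : nat) (e : rel 'I_n) : nat :=
  #|[set p : 'I_n * 'I_n | (val p.1 < val p.2) && e p.1 p.2]|.

Definition regular (d n : nat) (e : rel 'I_n) : Prop :=
  forall v, degree e v = d.

(* H_q on {1,...,q}: vertex i : 'I_q stands for i+1; u ~ v iff u + v >= q
   (loops allowed). *)
Definition Hq_adj (q : nat) : rel 'I_q := fun i j => q <= i.+1 + j.+1.

Definition hom_Hq (n : nat) (e : rel 'I_n) (q : nat) : nat :=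
  #|[set f : {ffun 'I_n -> 'I_q} |
      [forall x, forall y, e x y ==> Hq_adj (f x) (f y)]]|.

(* Main.v *)
Require Import Defs.
From mathcomp Require Import all_boot all_order all_algebra.
From mathcomp Require Import zify.
Import Order.TTheory GRing.Theory Num.Theory.

Module Helpers.
Set Implicit Arguments. Unset Strict Implicit. Unset Printing Implicit Defensive.

Lemma card_sumb (T : finType) (P : pred T) : #|[set x | P x]| = \sum_x (P x : nat).
Proof.
rewrite -sum1_card big_mkcond /=; apply: eq_bigr => i _; rewrite inE; by case: (P i).
Qed.

Definition cm (m x y : nat) := if x <= y then y - x else y + m - x.

Lemma cm_lt m x y : x < m -> y < m -> cm m x y < m.
Proof. rewrite /cm; case: ifP; lia. Qed.

Lemma cm_inj m x y1 y2 : x < m -> y1 < m -> y2 < m -> cm m x y1 = cm m x y2 -> y1 = y2.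
Proof. rewrite /cm; case: ifP; case: ifP; lia. Qed.

Lemma sum_cm (F : nat -> nat) m x : x < m -> \sum_(y < m) F (cm m x y) = \sum_(k < m) F k.
Proof.
move=> xm.
pose h (y : 'I_m) : 'I_m := Ordinal (cm_lt xm (ltn_ord y)).
have hi : injective h.
  move=> y1 y2 E; apply: val_inj; have /= E' := congr1 val E.
  exact: (cm_inj xm (ltn_ord y1) (ltn_ord y2) E').
by rewrite [RHS](reindex_inj hi).
Qed.

Lemma sum_itv m a b : \sum_(k < m) (((a <= k) && (k < b)) : nat) = minn b m - minn a m.
Proof.
elim: m => [|m IH]; first by rewrite big_ord0; lia.
rewrite big_ord_recr /= IH; lia.
Qed.

Lemma sum_eq1 m (j : nat) : \sum_(k < m) ((k == j :> nat) : nat) = (j < m).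
Proof.
rewrite (eq_bigr (fun k : 'I_m => (((j <= k) && (k < j.+1)) : nat))); last by move=> k _; lia.
rewrite sum_itv; lia.
Qed.


Section Internal.
Variables (m lo hi : nat) (h : bool) (hf a b : nat).
Hypotheses (lo_gt0 : 0 < lo) (lo_le : lo <= hi.+1) (hi_lt : 2 * hi < m)
  (h_even : h -> m = 2 * hf) (ab : a <= b) (bm : b <= m) (ab_even : (b - a) %% 2 = 0).

Definition inK k := ((lo <= k) && (k < hi.+1)) || ((m - hi <= k) && (k < (m - lo).+1))
  || (h && ((hf <= k) && (k < hf.+1))).

Lemma inK_sym k : 0 < k < m -> inK (m - k) = inK k.
Proof. move=> H; rewrite /inK; case: h h_even => He; lia. Qed.

Lemma inK0 : inK 0 = false.
Proof. rewrite /inK; case: h h_even => He; lia. Qed.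

Lemma or3_nat (x y z : bool) : x && y = false -> x && z = false -> y && z = false ->
  ((x || y || z) : nat) = x + y + z.
Proof. by case: x; case: y; case: z. Qed.

Lemma cardK : \sum_(k < m) (inK k : nat) = 2 * (hi.+1 - lo) + h.
Proof.
have E : forall k : 'I_m, (inK k : nat) = ((lo <= k) && (k < hi.+1)) + ((m - hi <= k) && (k < (m - lo).+1))
  + (h && ((hf <= k) && (k < hf.+1))).
  move=> k; rewrite /inK; move: (nat_of_ord k) => k'.
  apply: or3_nat.
  - move: hi_lt; clear; lia.
  - case: h h_even => He; rewrite ?andbF //; have := He isT; move: hi_lt; clear; lia.
  - case: h h_even => He; rewrite ?andbF //; have := He isT; move: hi_lt; clear; lia.
rewrite (eq_bigr _ (fun k _ => E k)) !big_split /= !sum_itv.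
case: h h_even => He /=.
  rewrite sum_itv; move: (He isT) hi_lt lo_le lo_gt0; clear; lia.
rewrite big1 //; move: hi_lt lo_le lo_gt0; clear; lia.
Qed.

Definition pm x := if (x - a) %% 2 == 0 then x.+1 else x.-1.
Definition pairM x y := (a <= x) && (x < b) && (a <= y) && (y < b)
  && ((x - a) %/ 2 == (y - a) %/ 2) && (x != y).

Lemma pairM_eq x y : pairM x y = (a <= x) && (x < b) && (y == pm x).
Proof. rewrite /pairM /pm; case: ifP; lia. Qed.

Definition RR x y := (x != y) && (inK (cm m x y) (+) pairM x y).

Lemma cm_sym x y : x < m -> y < m -> x != y -> cm m y x = m - cm m x y.
Proof. rewrite /cm; case: ifP; case: ifP; lia. Qed.

Lemma RR_sym x y : x < m -> y < m -> RR x y = RR y x.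
Proof.
move=> xm ym; rewrite /RR.
have [->|nxy] := eqVneq x y; first by [].
have nyx : y != x by rewrite eq_sym.
rewrite /= cm_sym // inK_sym; last by rewrite /cm; case: ifP; lia.
congr (_ (+) _); rewrite /pairM; lia.
Qed.

Lemma RR_irr x : RR x x = false.
Proof. by rewrite /RR eqxx. Qed.

Lemma RR_deg x : x < m ->
  \sum_(y < m) (RR x y : nat) = 2 * (hi.+1 - lo) + h + ((a <= x) && (x < b))
     - 2 * (((a <= x) && (x < b)) && inK 1).
Proof.
move=> xm.
have E : forall y : 'I_m, (RR x y : nat) + 2 * (inK (cm m x y) && pairM x y)
   = inK (cm m x y) + pairM x y.
  move=> y; rewrite /RR.
  have [Exy|nxy] := eqVneq x y.
    rewrite -Exy /cm leqnn subnn inK0 /pairM eqxx /=; lia.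
  rewrite /=; case: (inK _); case: (pairM _ _) => /=; lia.
have S : \sum_(y < m) ((RR x y : nat) + 2 * (inK (cm m x y) && pairM x y))
   = \sum_(y < m) ((inK (cm m x y) : nat) + pairM x y) by apply: eq_bigr => y _; exact: E.
rewrite big_split [RHS]big_split in S.
rewrite (sum_cm (fun k => (inK k : nat))) // cardK in S.
have P1 : \sum_(y < m) (pairM x y : nat) = ((a <= x) && (x < b)).
  rewrite (eq_bigr (fun y : 'I_m => ((a <= x) && (x < b)) * (nat_of_ord y == pm x))); last first.
    by move=> y _; rewrite pairM_eq; case: (nat_of_ord y == pm x); case: (a <= x); case: (x < b).
  rewrite -big_distrr /= sum_eq1 /pm; case: ifP; lia.
have P2 : \sum_(y < m) (2 * (inK (cm m x y) && pairM x y)) = 2 * (((a <= x) && (x < b)) && inK 1).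
  rewrite (eq_bigr (fun y : 'I_m => 2 * (((a <= x) && (x < b) && inK (cm m x (pm x))) * (nat_of_ord y == pm x)))); last first.
    move=> y _; rewrite pairM_eq.
    case Ey: (nat_of_ord y == pm x); last by lia.
    rewrite (eqP Ey); lia.
  rewrite -big_distrr -big_distrr /= sum_eq1.
  case Z: ((a <= x) && (x < b)); last by rewrite /= !muln0.
  have pmm : pm x < m by move: Z; rewrite /pm; case: ifP; lia.
  rewrite pmm /= muln1.
  congr (2 * (nat_of_bool _)).
  move: Z pmm; rewrite /pm /cm; case: ifP => H1 Z pmm.
    by rewrite leqnSn subSnn.
  have x0 : 0 < x by lia.
  rewrite leqNgt (ltn_predL x) x0 /=.
  have -> : x.-1 + m - x = m - 1 by lia.
  by rewrite inK_sym //; lia.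
rewrite P1 P2 in S; move: S; rewrite /=; lia.
Qed.

End Internal.


Lemma mod_lt2 z m : z < 2 * m -> z %% m = if z < m then z else z - m.
Proof.
move=> H; case: ifP => Hz; first by rewrite modn_small.
have -> : z = (z - m) + m by lia.
rewrite modnDr modn_small; lia.
Qed.

Lemma stub_one m P dl w : 0 < m -> dl <= m -> w < m ->
  (cm m (P %% m) w < dl : nat) = \sum_(P <= k < P + dl) ((k %% m == w) : nat).
Proof.
move=> m0; elim: dl => [|dl IH] dlm wm.
  by rewrite addn0 big_geq //; lia.
rewrite addnS big_nat_recr /=; last by lia.
rewrite -IH; last by lia.
rewrite -modnDml.
have pm : P %% m < m := ltn_pmod P m0.
rewrite (@mod_lt2 (P %% m + dl)); last by lia.
rewrite /cm; case: ifP; case: ifP. all: lia.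
Qed.

Lemma count_mod m D w : 0 < m -> w < m ->
  \sum_(0 <= k < D) ((k %% m == w) : nat) = D %/ m + (w < D %% m).
Proof.
move=> m0 wm; elim: D => [|D IH]; first by rewrite big_geq // div0n mod0n.
rewrite big_nat_recr //= IH divnS // modnS.
have Dm := ltn_pmod D m0.
have key : (m %| D.+1) = ((D %% m).+1 == m).
  rewrite /dvdn -addn1 -modnDml addn1.
  case E: ((D %% m).+1 < m).
    rewrite modn_small //; lia.
  have Em : (D %% m).+1 = m by lia.
  by rewrite Em modnn !eqxx.
rewrite key; case: ((D %% m).+1 =P m) => H /=; lia.
Qed.

Section Stubs.
Variables (m : nat) (df : nat -> nat).
Definition Pre u := \sum_(i < u) df i.
Definition VWn u w := cm m (Pre u %% m) w < df u.

Lemma stubs_sum N w : 0 < m -> w < m -> (forall u, u < N -> df u <= m) ->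
  \sum_(u < N) (VWn u w : nat) = \sum_(0 <= k < Pre N) ((k %% m == w) : nat).
Proof.
move=> m0 wm; elim: N => [|N IH] H; first by rewrite big_ord0 /Pre big_ord0 big_geq.
rewrite big_ord_recr /= IH; last by move=> u uN; apply: H; lia.
rewrite /Pre big_ord_recr /= [RHS](@big_cat_nat _ _ _ (\sum_(i < N) df i)) //; last exact: leq_addr.
rewrite /=; congr (_ + _); rewrite /VWn stub_one //; apply: H; lia.
Qed.

Lemma VW_deg u : 0 < m -> df u <= m -> \sum_(w < m) (VWn u w : nat) = df u.
Proof.
move=> m0 dm; rewrite /VWn.
rewrite (sum_cm (fun k => (k < df u : nat))); last exact: ltn_pmod.
rewrite (eq_bigr (fun k : 'I_m => (((0 <= k) && (k < df u)) : nat))) // sum_itv; lia.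
Qed.
End Stubs.


Lemma handshake n (e : rel 'I_n) : simple_graph e ->
  \sum_(u < n) degree e u = 2 * nedges e.
Proof.
move=> [esym eirr].
rewrite /degree (eq_bigr (fun u => \sum_(v < n) (e u v : nat))); last first.
  by move=> u _; rewrite -sum1_card big_mkcond; apply: eq_bigr => v _; rewrite inE; case: (e u v).
rewrite pair_big /= /nedges (card_sumb (fun p : 'I_n * 'I_n => (val p.1 < val p.2) && e p.1 p.2)).
rewrite (eq_bigr (fun p : 'I_n * 'I_n => (((val p.1 < val p.2) && e p.1 p.2) : nat)
   + ((val p.2 < val p.1) && e p.2 p.1))); last first.
  move=> [x y] _ /=; rewrite (esym y x).
  case: (ltngtP x y) => H.
  - by rewrite /= addn0.
  - by rewrite /=.
  - have -> : x = y by apply: val_inj.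
    by rewrite (negbTE (eirr y)).
rewrite big_split /=.
pose sw (p : 'I_n * 'I_n) := (p.2, p.1).
have swi : injective sw by move=> [a b] [c d] /= [-> ->].
rewrite [X in _ + X = _](reindex_inj swi) /=; lia.
Qed.

Lemma predq_lt q : 0 < q -> q.-1 < q. Proof. by case: q. Qed.
Definition topq (q : nat) (q0 : 0 < q) : 'I_q := Ordinal (predq_lt q0).

Lemma deg_sum n (e : rel 'I_n) (x : 'I_n) : degree e x = \sum_(y < n) (e x y : nat).
Proof. by rewrite /degree -sum1_card big_mkcond; apply: eq_bigr => v _; rewrite inE; case: (e x v). Qed.

Section Ext.
Variables (n m : nat) (e : rel 'I_n) (VW RW : nat -> nat -> bool).

Definition E' : rel 'I_(n + m) := fun x y =>
  match split x, split y with
  | inl u, inl v => e u v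
  | inl u, inr w => VW u w
  | inr w, inl u => VW u w
  | inr w1, inr w2 => RW w1 w2
  end.

Lemma split_l (u : 'I_n) : split (lshift m u) = inl u.
Proof. exact: (unsplitK (inl u)). Qed.
Lemma split_r (w : 'I_m) : split (rshift n w) = inr w.
Proof. exact: (unsplitK (inr w)). Qed.


Lemma E'_sym : (forall x y, e x y = e y x) -> (forall w1 w2 : 'I_m, RW w1 w2 = RW w2 w1) ->
  forall x y, E' x y = E' y x.
Proof.
move=> es rs x y; rewrite /E'.
case: (split x) => [u|w]; case: (split y) => [v|w'] //.
Qed.

Lemma E'_irr : (forall x, ~~ e x x) -> (forall w : 'I_m, RW w w = false) -> forall x, ~~ E' x x.
Proof.
move=> ei ri x; rewrite /E'; case: (split x) => [u|w] //; by rewrite ri.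
Qed.

Lemma degE' (x : 'I_(n + m)) : degree E' x = \sum_(y < n + m) (E' x y : nat).
Proof. exact: deg_sum. Qed.

Lemma deg_l (u : 'I_n) : degree E' (lshift m u) = degree e u + \sum_(w < m) (VW u w : nat).
Proof.
rewrite degE' big_split_ord /=; congr (_ + _).
  by rewrite deg_sum; apply: eq_bigr => v _; rewrite /E' split_l split_l.
by apply: eq_bigr => w _; rewrite /E' split_l split_r.
Qed.

Lemma deg_r (w : 'I_m) : degree E' (rshift n w) = \sum_(u < n) (VW u w : nat) + \sum_(w2 < m) (RW w w2 : nat).
Proof.
rewrite degE' big_split_ord /=; congr (_ + _).
  by apply: eq_bigr => v _; rewrite /E' split_l split_r.
by apply: eq_bigr => v _; rewrite /E' split_r split_r.
Qed.

Lemma hom_le q : 0 < q -> hom_Hq e q <= hom_Hq E' q.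
Proof.
move=> q0.
pose ext (f : {ffun 'I_n -> 'I_q}) : {ffun 'I_(n + m) -> 'I_q} :=
  [ffun x => match split x with inl u => f u | inr _ => topq q0 end].
have exti : injective ext.
  move=> f1 f2 E; apply/ffunP => u.
  have := congr1 (fun g : {ffun 'I_(n + m) -> 'I_q} => g (lshift m u)) E; rewrite /= !ffunE split_l //.
rewrite /hom_Hq -(card_imset _ exti).
apply: subset_leq_card; apply/subsetP => g /imsetP [f].
rewrite inE => /forallP Hf -> {g}.
rewrite inE; apply/forallP => x; apply/forallP => y; apply/implyP.
rewrite /E' !ffunE /Hq_adj.
case: (split x) => [u|w]; case: (split y) => [v|w'] /=.
- by move=> exy; have := Hf u; move/forallP/(_ v)/implyP/(_ exy).
- move=> _; have := ltn_ord (f u); lia.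
- move=> _; have := ltn_ord (f v); lia.
- move=> _; lia.
Qed.
End Ext.



Lemma oddE x : odd x = (x %% 2 == 1).
Proof. by rewrite modn2; case: odd. Qed.

Lemma half_eq x : ~~ odd x -> x = 2 * x./2.
Proof. by move=> Ho; rewrite -{1}(odd_double_half x) (negbTE Ho) add0n -mul2n. Qed.

Lemma dh x : 2 * x./2 + odd x = x.
Proof. by rewrite addnC mul2n odd_double_half. Qed.

Lemma mod2_odd x : ~~ odd x -> x %% 2 = 0.
Proof. by rewrite modn2 => /negbTE ->. Qed.

Lemma internal_exists m c r : 3 <= m -> 1 <= c -> c < m -> r < m ->
  odd r = odd m && odd c ->
  exists RW : nat -> nat -> bool,
    [/\ forall x y, x < m -> y < m -> RW x y = RW y x,
        forall x, RW x x = false &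
        forall x, x < m -> \sum_(y < m) (RW x y : nat) = c - (x < r)].
Proof.
move=> m3 c1 cm rm par.
have hfe : ~~ odd m -> m = 2 * m./2 by exact: half_eq.
case O: (odd r || (c == 1)).
- have cm2 : c.+1 < m.
    case/orP: O => [Or|/eqP->]; last by apply: leq_trans m3.
    move: par; rewrite Or => /esym/andP [Om Oc].
    rewrite ltn_neqAle cm andbT; apply/negP => /eqP E.
    by move: Om; rewrite -E /= Oc.
  have hoe : ~~ odd (c - 1).
    case/orP: O => [Or|/eqP->] //.
    move: par; rewrite Or => /esym/andP [Om Oc].
    by rewrite oddB // Oc.
  have dc := dh (c - 1); rewrite (negbTE hoe) addn0 in dc.
  move: ((c - 1)./2) dc => t dc.
  have lo0 : 0 < 2 by [].
  have lole : 2 <= (t + 1).+1 by rewrite addn1.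
  have hil : 2 * (t + 1) < m by move: cm2 dc c1; clear; lia.
  have he : false -> m = 2 * m./2 by [].
  have ab : r <= m by apply: ltnW.
  have ab2 : (m - r) %% 2 = 0.
    apply: mod2_odd; rewrite oddB ?(ltnW rm) //.
    case/orP: O => [Or|/eqP Ec]; first by move: par; rewrite Or => /esym/andP [-> _].
    by move: par; rewrite Ec /= andbT => ->; rewrite addbb.
  exists (RR m 2 (t + 1) false (m./2) r m); split.
  + move=> x y xm ym; exact: RR_sym.
  + move=> x; exact: RR_irr.
  + move=> x xm; rewrite (RR_deg lo0 lole hil he ab (leqnn m) ab2 xm).
    have -> : inK m 2 (t + 1) false (m./2) 1 = false.
      rewrite /inK /= orbF; move: hil; clear; lia.
    move: dc c1 xm; clear; lia.
- have Or : odd r = false by move: O; case: (odd r).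
  have c2 : 2 <= c by move: O c1; rewrite Or /=; clear; lia.
  have dc := dh c.
  have he : odd c -> m = 2 * m./2.
    move=> Oc; apply: hfe; apply/negP => Om.
    by move: par; rewrite Or Om Oc.
  move: (c./2) dc => t dc.
  have lo0 : 0 < 1 by [].
  have lole : 1 <= t.+1 by [].
  have hil : 2 * t < m by move: cm dc; clear; lia.
  have ab : 0 <= r by [].
  have bm : r <= m by apply: ltnW.
  have ab2 : (r - 0) %% 2 = 0 by rewrite subn0; apply: mod2_odd; rewrite Or.
  exists (RR m 1 t (odd c) (m./2) 0 r); split.
  + move=> x y xm ym; exact: RR_sym.
  + move=> x; exact: RR_irr.
  + move=> x xm; rewrite (RR_deg lo0 lole hil he ab bm ab2 xm).
    have -> : inK m 1 t (odd c) (m./2) 1 = true.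
      rewrite /inK; apply/orP; left; apply/orP; left; move: dc c2; clear; lia.
    move: dc c2 xm; clear; lia.
Qed.

Lemma boolpar (d m n c r : bool) : (d -> ~~ (n (+) m)) -> (m && c (+) d && n = m && d (+) r) -> r = m && c.
Proof. by case: d; case: m; case: n; case: c; case: r => //= /(_ isT). Qed.


Lemma choose_m d n Dn : 0 < d ->
  exists m, [/\ 3 <= m, d < m, Dn < m * d,
     m <= maxn (1 + 2 * uphalf d) (4 + Dn %/ d) & (odd d -> ~~ odd (n + m))].
Proof.
move=> d0.
have hU : 1 + 2 * uphalf d = 1 + (d %% 2) + d.
  have := uphalfK d; rewrite -mul2n modn2; lia.
have hV := ltn_ceil Dn d0.
move: (1 + 2 * uphalf d) (Dn %/ d) hU hV => U X hU hV.
have hM : forall M, M.+1 >= 4 + X -> Dn < M * d.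
  move=> M HM; apply: (leq_trans hV); rewrite leq_mul2r; apply/orP; right; lia.
case E: (odd d && odd (n + maxn U (4 + X))).
- exists (maxn U (4 + X)).-1; split.
  + lia.
  + move: E; rewrite !oddE; lia.
  + apply: hM; lia.
  + exact: leq_pred.
  + move: E; rewrite !oddE; lia.
- exists (maxn U (4 + X)); split.
  + lia.
  + lia.
  + apply: hM; lia.
  + by [].
  + by move=> Hd; move: E; rewrite Hd /= => ->.
Qed.

Lemma par_lemma m d n E Dn : 0 < m -> Dn = d * n - 2 * E -> 2 * E <= d * n -> Dn %/ m <= d ->
  (odd d -> ~~ odd (n + m)) -> odd (Dn %% m) = odd m && odd (d - Dn %/ m).
Proof.
move=> m0 HD HE sd mpar.
have Dsr := divn_eq Dn m.
move: (Dn %/ m) (Dn %% m) Dsr sd => s r Dsr sd.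
have Eq : m * (d - s) + d * n = m * d + r + 2 * E.
  rewrite mulnBr.
  have : m * s <= m * d by rewrite leq_mul2l sd orbT.
  rewrite (mulnC m s); move: HD Dsr HE; move: (s * m) (m * d) (d * n) => a b c'; lia.
have := congr1 odd Eq; rewrite !oddD !oddM /= addbF addbb addbF.
move: mpar; rewrite (oddD n m); exact: boolpar.
Qed.

Lemma ar2 (s d : nat) (b : bool) : s < d -> s + b + (d - s - b) = d.
Proof. lia. Qed.

End Helpers.
Import Helpers.

Local Open Scope ring_scope.

Theorem lemma3p4 (d q n : nat) (e : rel 'I_n) :
  (0 < d)%N -> (0 < q)%N ->
  simple_graph e ->
  (forall v, (degree e v <= d)%N) ->
  exists (n' : nat) (e' : rel 'I_n'),
    [/\ simple_graph e', regular d e',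
        (n'%:R : rat) <=
          1 + Num.max (3 + (d * n - 2 * nedges e)%N%:R / d%:R) (2 * (uphalf d)%:R)
            + n%:R
      & (hom_Hq e q <= hom_Hq e' q)%N].
Proof.
move=> d0 q0 sg degd; have [esym eirr] := sg.
pose df (i : nat) : nat := if @insub nat (fun i => i < n)%N 'I_n i is Some u then (d - degree e u)%N else 0%N.
have dfu : forall u : 'I_n, df u = (d - degree e u)%N by move=> u; rewrite /df valK.
have dfd : forall i, (df i <= d)%N by move=> i; rewrite /df; case: insub => [u|] //; exact: leq_subr.
have HE : (2 * nedges e <= d * n)%N.
  rewrite -handshake // mulnC -[X in (_ <= X * _)%N]card_ord -sum_nat_const.
  by apply: leq_sum => u _; exact: degd.
have HD : Pre df n = (d * n - 2 * nedges e)%N.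
  rewrite -handshake // /Pre.
  have H : (\sum_(i < n) df i + \sum_(u < n) degree e u = d * n)%N.
    rewrite -big_split /= mulnC -[X in (_ = X * _)%N]card_ord -sum_nat_const.
    by apply: eq_bigr => u _; rewrite dfu subnK.
  by rewrite -H addnK.
have [m [m3 md Dm mMax mpar]] := choose_m n (Pre df n) d0.
have m0 : (0 < m)%N by apply: leq_trans m3.
have sd : (Pre df n %/ m < d)%N by rewrite ltn_divLR // mulnC.
have par := par_lemma m0 HD HE (ltnW sd) mpar.
have c1 : (1 <= d - Pre df n %/ m)%N by rewrite subn_gt0.
have cm : (d - Pre df n %/ m < m)%N by apply: leq_ltn_trans (leq_subr _ _) md.
have [RW [RWs RWi RWd]] := internal_exists m3 c1 cm (ltn_pmod _ m0) par.
pose e' := E' (m:=m) e (VWn m df) RW.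
have dfm : forall u, (df u <= m)%N by move=> u; apply: leq_trans (dfd u) (ltnW md).
exists (n + m)%N, e'; split.
- split.
  + apply: E'_sym => // w1 w2; exact: RWs.
  + apply: E'_irr => //.
- move=> x; rewrite -(splitK x); case: (split x) => [u|w] /=.
  + rewrite deg_l VW_deg // dfu subnKC //.
  + rewrite deg_r RWd // stubs_sum // count_mod //.
    exact: ar2.
- rewrite natrD addrC lerD2r -HD.
  case: (leqP (4 + Pre df n %/ d) (1 + 2 * uphalf d))%N => HUV.
    have HmU : (m <= 1 + 2 * uphalf d)%N by move: mMax; rewrite (maxn_idPl HUV).
    apply: le_trans (_ : (((1 + 2 * uphalf d)%N)%:R : rat) <= _).
      by rewrite ler_nat.
    rewrite natrD natrM lerD2l le_max; apply/orP; right; done.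
  have HmV : (m <= 4 + Pre df n %/ d)%N by move: mMax; rewrite (maxn_idPr (ltnW HUV)).
  apply: le_trans (_ : (((4 + Pre df n %/ d)%N)%:R : rat) <= _); first by rewrite ler_nat.
  rewrite natrD.
  apply: (@le_trans _ _ (1 + (3 + (Pre df n)%:R / d%:R))); last first.
    by rewrite lerD2l le_max lexx.
  rewrite addrA (_ : 1 + 3 = 4%:R :> rat); last by apply/eqP.
  rewrite lerD2l ler_pdivlMr ?ltr0n // -natrM ler_nat.
  exact: leq_trunc_div.
- exact: hom_le.
Qed.
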